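(* Let $n\ge 5$, let $k$ be a positive integer, let $x\in[1,n]$ and let $(i,j)$ be a cell with $i,j\in[1,n]$. There exists a Latin square of order $n$ with inner distance $k$ if and only if there exists a Latin square $(m_{a,b})$ of order $n$ with inner distance $k$ and $m_{i,j}=x$.
   Context: Symbols are $[1,n]$. For $a,b\in[1,n]$, $\mathrm{dist}(a,b)$ is the minimum of the residues of $a-b$ and $b-a$ modulo $n$ (in $[0,n-1]$). A Latin square of order $n$ is an $n\times n$ matrix over $[1,n]$ with each symbol exactly once in every row and column; its inner distance is the minimum of $\mathrm{dist}$ over symbols in horizontally or vertically adjacent cells. *)

(* Defs.v *)
From mathcomp Require Import all_boot.
Set Implicit Arguments. Unset Strict Implicit. Unset Printing Implicit Defensive.

(* Symbols [1,n] are represented by 'I_n (symbol s+1 <-> ordinal s);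
   rows/columns [1,n] likewise by 'I_n.  dist is shift-invariant. *)

Definition resdiff (n a b : nat) : nat := (a + n - b) %% n.

Definition sdist (n : nat) (a b : 'I_n) : nat := minn (resdiff n a b) (resdiff n b a).

Definition latin_square (n : nat) (M : 'I_n -> 'I_n -> 'I_n) : Prop :=
  (forall (a : 'I_n) (s : 'I_n), #|[set b : 'I_n | M a b == s]| = 1) /\
  (forall (b : 'I_n) (s : 'I_n), #|[set a : 'I_n | M a b == s]| = 1).

Definition adjacent (n : nat) (c d : 'I_n * 'I_n) : bool :=
  ((c.1 == d.1) && ((c.2.+1 == d.2) || (d.2.+1 == c.2))) ||
  ((c.2 == d.2) && ((c.1.+1 == d.1) || (d.1.+1 == c.1))).

Definition inner_distance_is (n : nat) (M : 'I_n -> 'I_n -> 'I_n) (k : nat) : Prop :=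
  (exists c d, adjacent c d /\ sdist (M c.1 c.2) (M d.1 d.2) = k) /\
  (forall c d, adjacent c d -> k <= sdist (M c.1 c.2) (M d.1 d.2)).

(* Main.v *)
Require Import Defs.
From mathcomp Require Import all_boot all_algebra.
Import GRing.Theory.

Lemma resdiffE (N : nat) (a b : 'I_N.+1) : resdiff N.+1 a b = val (a - b)%R.
Proof.
rewrite /resdiff /= /Zp_add /= modnDmr addnBA //; exact: ltnW (ltn_ord b).
Qed.

Lemma sdist_shift (N : nat) (a b c : 'I_N.+1) :
  sdist (a + c)%R (b + c)%R = sdist a b.
Proof.
rewrite /sdist !resdiffE.
have E : forall u v : 'I_N.+1, ((u + c) - (v + c) = u - v)%R.
  by move=> u v; rewrite opprD addrACA subrr addr0.
by rewrite !E.
Qed.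

Theorem mainTheorem11 (n k : nat) (x i j : 'I_n) :
  5 <= n -> 0 < k ->
  (exists M : 'I_n -> 'I_n -> 'I_n, latin_square M /\ inner_distance_is M k) <->
  (exists M : 'I_n -> 'I_n -> 'I_n,
      latin_square M /\ inner_distance_is M k /\ M i j = x).
Proof.
case: n x i j => [|N] x i j; first by [].
move=> _ _; split; last by case=> M [H1 [H2 _]]; exists M.
case=> M [[L1 L2] [[c0 [d0 [Ad Ed]]] H]].
pose c : 'I_N.+1 := (x - M i j)%R.
pose M' a b := (M a b + c)%R.
have eqs : forall u s : 'I_N.+1, (u + c == s)%R = (u == s - c)%R.
  move=> u s; apply/eqP/eqP => [<-|->]; first by rewrite addrK.
  by rewrite subrK.
exists M'; split; [split|split; [split|]].
- move=> a s; rewrite -(L1 a (s - c)%R); apply: eq_card => b.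
  by rewrite !inE /M' eqs.
- move=> b s; rewrite -(L2 b (s - c)%R); apply: eq_card => a.
  by rewrite !inE /M' eqs.
- by exists c0, d0; rewrite /M' sdist_shift.
- by move=> u v A; rewrite /M' sdist_shift; apply: H.
- by rewrite /M' /c addrC subrK.
Qed.
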